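(* Consider $n\ge2$ agents in $\mathbb{R}^d$ ($d\ge2$) with positions $p_i(t)$, an undirected graph $\mathcal{G}=(\mathcal{V},\mathcal{E})$, constant desired bearings $\{g_{ij}^*\}_{(i,j)\in\mathcal{E}}$, leaders $\mathcal{V}_\ell=\{1,\dots,n_\ell\}$ and followers $\mathcal{V}_f=\{n_\ell+1,\dots,n\}$. The leaders move with a constant velocity: $\dot p_i(t)=\mathbf{v}_i^*$ for $i\in\mathcal{V}_\ell$, and $\mathbf{v}_\ell^*=[(\mathbf{v}_1^* )^T,\dots,(\mathbf{v}_{n_\ell}^* )^T]^T$ is constant. The followers obey, for $i\in\mathcal{V}_f$, $$\dot p_i=-k_P\sum_{j\in\mathcal{N}_i}P_{g_{ij}^*}(p_i-p_j)-k_I\xi_i,\qquad \dot\xi_i=\sum_{j\in\mathcal{N}_i}P_{g_{ij}^*}(p_i-p_j),$$ with constants $k_P,k_I>0$ and arbitrary initial conditions. Suppose the standing assumption below holds. Let $\delta(t)=p_f(t)-p_f^*(t)$ with $p_f^*(t)=-\mathcal{L}_{ff}^{-1}\mathcal{L}_{f\ell}p_\ell(t)$ and $\xi=[\xi_{n_\ell+1}^T,\dots,\xi_n^T]^T$. Then $\delta(t)$ and $\xi(t)$ converge globally and exponentially to $\delta(\infty)=0$ and $\xi(\infty)=\mathcal{L}_{ff}^{-1}\mathcal{L}_{f\ell}\mathbf{v}_\ell^*/k_I$ respectively. Consequently, as $t\to\infty$, $p_f(t)-p_f^*(t)\to0$ where $p_f^*(t)=-\mathcal{L}_{ff}^{-1}\mathcal{L}_{f\ell}p_\ell(t)$,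 and $\dot p_f(t)\to -\mathcal{L}_{ff}^{-1}\mathcal{L}_{f\ell}\mathbf{v}_\ell^*$.
   Context: $P_x=I_d-\frac{xx^T}{\|x\|^2}$ for nonzero $x$; $\mathcal{N}_i$ is the neighbor set of $i$ in $\mathcal{G}$. $p_\ell=[p_1^T,\dots,p_{n_\ell}^T]^T$, $p_f=[p_{n_\ell+1}^T,\dots,p_n^T]^T$. The bearing Laplacian $\mathcal{L}\in\mathbb{R}^{dn\times dn}$ has $(i,j)$-th $d\times d$ block $0$ if $i\ne j,(i,j)\notin\mathcal{E}$; $-P_{g_{ij}^*}$ if $i\ne j,(i,j)\in\mathcal{E}$; $\sum_{k\in\mathcal{N}_i}P_{g_{ik}^*}$ if $i=j$; it is partitioned as $\begin{bmatrix}\mathcal{L}_{\ell\ell}&\mathcal{L}_{\ell f}\\ \mathcal{L}_{f\ell}&\mathcal{L}_{ff}\end{bmatrix}$ according to leaders/followers. Infinitesimal bearing rigidity of a configuration $q\in\mathbb{R}^{dn}$ (no two points coinciding): orient each edge, let $g_k=(q_j-q_i)/\|q_j-q_i\|$ for the $k$-th oriented edge, $F_B(q)=[g_1^T,\dots,g_m^T]^T$, $R_B(q)=\partial F_B/\partial q$; $\mathcal{G}(q)$ is infinitesimally bearing rigid if $\mathrm{Null}(R_B(q))=\mathrm{span}\{\mathbf{1}_n\otimes I_d,q\}$. Target formation: for each $t$, $p^*(t)\in\mathbb{R}^{dn}$ with $p_i^*(t)=p_i(t)$ for $i\in\mathcal{V}_\ell$ and $(p_j^*(t)-p_i^*(t))/\|p_j^*(t)-p_i^*(t)\|=g_{ij}^*$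 for all $(i,j)\in\mathcal{E}$. Standing assumption: the target formation exists for all $t$, is infinitesimally bearing rigid, and $n_\ell\ge 2$. Under this assumption $\mathcal{L}_{ff}$ is symmetric positive definite. *)

(* Defs.v *)
From HB Require Import structures.
From mathcomp Require Import all_boot all_order all_algebra.
From mathcomp Require Import all_classical all_reals all_analysis.
Set Implicit Arguments. Unset Strict Implicit. Unset Printing Implicit Defensive.
Import Order.TTheory GRing.Theory Num.Theory.
Import numFieldNormedType.Exports.
Local Open Scope ring_scope.

Section Bearing.
Variables (R : realType) (d : nat).

Definition enorm (x : 'rV[R]_d) : R := Num.sqrt (\sum_(k < d) x 0 k ^+ 2).

(* Orthogonal projection P_x = I_d - x x^T / ||x||^2 (x stored as a row,
   so x x^T is written x^T *m x). *)
Definition Pproj (x : 'rV[R]_d) : 'M[R]_d :=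
  1%:M - (enorm x ^+ 2)^-1 *: (x^T *m x).

Definition bearing_of n (q : 'M[R]_(n, d)) (i j : 'I_n) : 'rV[R]_d :=
  (enorm (row j q - row i q))^-1 *: (row j q - row i q).

Definition bLblock n (E : rel 'I_n) (g : 'I_n -> 'I_n -> 'rV[R]_d)
  (i j : 'I_n) : 'M[R]_d :=
  if i == j then \sum_(k | E i k) Pproj (g i k)
  else if E i j then - Pproj (g i j) else 0.

(* Assemble an (m*d) x (k*d) matrix from d x d blocks; entry index
   mxvec_index i a corresponds to coordinate a of agent i. *)
Definition blockmx m k (B : 'I_m -> 'I_k -> 'M[R]_d) : 'M[R]_(m * d, k * d) :=
  \matrix_(r, c) \sum_(i < m) \sum_(a < d) \sum_(j < k) \sum_(b < d)
     ((r == mxvec_index i a) && (c == mxvec_index j b))%:R * B i j a b.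

Definition stack m (x : 'I_m -> 'rV[R]_d) : 'cV[R]_(m * d) :=
  (mxvec (\matrix_(i < m) x i))^T.

(* Blocks of the bearing Laplacian: leaders are 'I_nl (first), followers
   are 'I_nf (last), n = nl + nf. *)
Definition Lff nl nf (E : rel 'I_(nl + nf)) g : 'M[R]_(nf * d, nf * d) :=
  blockmx (fun i j : 'I_nf => bLblock E g (rshift nl i) (rshift nl j)).
Definition Lfl nl nf (E : rel 'I_(nl + nf)) g : 'M[R]_(nf * d, nl * d) :=
  blockmx (fun (i : 'I_nf) (j : 'I_nl) => bLblock E g (rshift nl i) (lshift nf j)).

(* Infinitesimal bearing rigidity of G(q): no two points coincide and
   Null(R_B(q)) = span{1_n (x) I_d, q}, where R_B(q) = dF_B/dq and F_B stacks
   the bearings of the edges oriented as i -> j with i < j.  R_B(q) delta = 0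
   iff every edge-block of the directional derivative of F_B along delta
   vanishes. *)
Definition inf_bearing_rigid n (E : rel 'I_n) (q : 'M[R]_(n, d)) : Prop :=
  (forall i j : 'I_n, i != j -> row i q != row j q) /\
  forall delta : 'M[R]_(n, d),
    (forall i j : 'I_n, E i j -> (i < j)%N ->
        'D_delta (fun q' : 'M[R]_(n, d) => bearing_of q' i j) q = 0)
    <-> exists (a : 'rV[R]_d) (c : R), delta = \matrix_(i < n) a + c *: q.

Definition target_formation nl nf (E : rel 'I_(nl + nf))
  (g : 'I_(nl + nf) -> 'I_(nl + nf) -> 'rV[R]_d) (pl : 'I_nl -> 'rV[R]_d)
  (q : 'M[R]_(nl + nf, d)) : Prop :=
  (forall i : 'I_nl, row (lshift nf i) q = pl i) /\
  (forall i j, E i j -> bearing_of q i j = g i j).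

End Bearing.

(* Main.v *)
Require Import Defs.
From HB Require Import structures.
From mathcomp Require Import all_boot all_order all_algebra.
From mathcomp Require Import all_classical all_reals all_analysis.
From mathcomp Require Import ring lra.
Import Order.TTheory GRing.Theory Num.Theory.
Import numFieldNormedType.Exports.
Local Open Scope classical_set_scope.
Local Open Scope ring_scope.
Set Implicit Arguments. Unset Strict Implicit. Unset Printing Implicit Defensive.

Section P1.
Variable R : realType.

Lemma sum_mxvec m n (F : 'I_(m * n) -> R) :
  \sum_k F k = \sum_(i < m) \sum_(j < n) F (mxvec_index i j).
Proof.
rewrite (reindex (uncurry (@mxvec_index m n))) /=; last first.
  by case: (curry_mxvec_bij m n) => h h1 h2; exists h => x _; [exact: h1 | exact: h2].
by rewrite pair_big /=; apply: eq_bigr => -[i j].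
Qed.

Lemma mxvec_index_eq m n (i i' : 'I_m) (j j' : 'I_n) :
  (mxvec_index i j == mxvec_index i' j') = (i == i') && (j == j').
Proof.
apply/eqP/andP => [|[/eqP-> /eqP->]//].
by move/cast_ord_inj/enum_rank_inj => [-> ->].
Qed.

Lemma sum_delta_gen (I : finType) (i : I) (F : I -> R) :
  (forall i', i' != i -> F i' = 0) -> \sum_i' F i' = F i.
Proof. by move=> H; rewrite (bigD1 i) //= big1 ?addr0. Qed.

Variable d : nat.

Lemma blockmxE m k (B : 'I_m -> 'I_k -> 'M[R]_d) i a j b :
  blockmx B (mxvec_index i a) (mxvec_index j b) = B i j a b.
Proof.
rewrite mxE (@sum_delta_gen _ i); last first.
  move=> i' ne; rewrite eq_sym in ne; apply: big1 => a' _; apply: big1 => j' _; apply: big1 => b' _.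
  by rewrite mxvec_index_eq (negbTE ne) mul0r.
rewrite (@sum_delta_gen _ a); last first.
  move=> a' ne; rewrite eq_sym in ne; apply: big1 => j' _; apply: big1 => b' _.
  by rewrite mxvec_index_eq (negbTE ne) andbF mul0r.
rewrite (@sum_delta_gen _ j); last first.
  move=> j' ne; rewrite eq_sym in ne; apply: big1 => b' _.
  by rewrite !mxvec_index_eq (negbTE ne) andbF mul0r.
rewrite (@sum_delta_gen _ b); last first.
  by move=> b' ne; rewrite eq_sym in ne; rewrite !mxvec_index_eq (negbTE ne) !andbF mul0r.
by rewrite !eqxx mul1r.
Qed.

Lemma stackE m (x : 'I_m -> 'rV[R]_d) i a : stack x (mxvec_index i a) 0 = x i 0 a.
Proof. by rewrite /stack mxE mxvecE mxE. Qed.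

Lemma mul_blockmx_stack m k (B : 'I_m -> 'I_k -> 'M[R]_d) (y : 'I_k -> 'rV[R]_d) i a :
  (blockmx B *m stack y) (mxvec_index i a) 0 = \sum_j \sum_b B i j a b * y j 0 b.
Proof.
rewrite mxE sum_mxvec; apply: eq_bigr => j _; apply: eq_bigr => b _.
by rewrite blockmxE stackE.
Qed.

End P1.

Section P2.
Variable R : realType.
Variable d : nat.

Lemma PprojE (x : 'rV[R]_d) i j :
  Pproj x i j = (i == j)%:R - (enorm x ^+ 2)^-1 * (x 0 i * x 0 j).
Proof. by rewrite /Pproj !mxE big_ord1 !mxE. Qed.

Lemma Pproj_sym (x : 'rV[R]_d) i j : Pproj x i j = Pproj x j i.
Proof. by rewrite !PprojE eq_sym [x 0 i * _]mulrC. Qed.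

Lemma lap_row n (E : rel 'I_n) (g : 'I_n -> 'I_n -> 'rV[R]_d)
   (X : 'I_n -> 'rV[R]_d) I a :
  ~~ E I I ->
  \sum_J \sum_b bLblock E g I J a b * X J 0 b =
  (\sum_(J | E I J) (X I - X J) *m Pproj (g I J)) 0 a.
Proof.
move=> EII.
rewrite summxE (bigD1 I) //= /bLblock eqxx.
have -> : \sum_(J | J != I) \sum_b (if I == J then \sum_(k | E I k) Pproj (g I k)
          else if E I J then - Pproj (g I J) else 0) a b * X J 0 b =
   \sum_(J | E I J) \sum_b (- Pproj (g I J) a b * X J 0 b).
  rewrite big_mkcond [RHS]big_mkcond; apply: eq_bigr => J _ /=.
  case: (eqVneq J I) => [->|neJ]; first by rewrite (negbTE EII).
  case: (E I J) => //.
    by apply: eq_bigr => b _; rewrite mxE.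
  by apply: big1 => b _; rewrite mxE mul0r.
have -> : \sum_b (\sum_(k | E I k) Pproj (g I k)) a b * X I 0 b =
   \sum_(J | E I J) \sum_b (Pproj (g I J) a b * X I 0 b).
  rewrite exchange_big /=; apply: eq_bigr => b _.
  by rewrite summxE mulr_suml.
rewrite -big_split /=; apply: eq_bigr => J _.
rewrite mxE -big_split /=; apply: eq_bigr => b _.
by rewrite (Pproj_sym _ b a) [X in X * Pproj _ _ _]mxE [(- X J) 0 b]mxE; ring.
Qed.

End P2.

Section P3.
Variable R : realType.
Variable d : nat.

Definition frow nl nf (E : rel 'I_(nl + nf)) (g : 'I_(nl + nf) -> 'I_(nl + nf) -> 'rV[R]_d)
  (X : 'I_(nl + nf) -> 'rV[R]_d) (I : 'I_(nl + nf)) : 'rV[R]_d :=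
  \sum_(J | E I J) (X I - X J) *m Pproj (g I J).

Lemma follower_stack nl nf (E : rel 'I_(nl + nf)) (g : 'I_(nl + nf) -> 'I_(nl + nf) -> 'rV[R]_d) (X : 'I_(nl + nf) -> 'rV[R]_d) :
  (forall i, ~~ E i i) ->
  stack (fun i : 'I_nf => frow E g X (rshift nl i))
  = Lff E g *m stack (fun i => X (rshift nl i)) + Lfl E g *m stack (fun i => X (lshift nf i)).
Proof.
move=> Eirr; apply/matrixP => r c; case/mxvec_indexP: r => i a; rewrite ord1.
rewrite stackE mxE /Lff /Lfl !mul_blockmx_stack /frow -lap_row //.
by rewrite big_split_ord /= addrC.
Qed.

Lemma mxNE m n (A : 'M[R]_(m, n)) i j : (- A) i j = - A i j.
Proof. by rewrite mxE. Qed.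

Lemma Lff_tr nl nf (E : rel 'I_(nl + nf)) (g : 'I_(nl + nf) -> 'I_(nl + nf) -> 'rV[R]_d) :
  (forall I J, E I J = E J I) ->
  (forall I J, E I J -> Pproj (g J I) = Pproj (g I J)) ->
  (Lff E g)^T = Lff E g.
Proof.
move=> Esym Hsym; apply/matrixP => r c.
case/mxvec_indexP: r => i a; case/mxvec_indexP: c => j b.
rewrite mxE /Lff !blockmxE /bLblock !(inj_eq (@rshift_inj _ _)) eq_sym.
case: (eqVneq i j) => [->|ne].
  by rewrite !summxE; apply: eq_bigr => k _; rewrite Pproj_sym.
rewrite Esym; case EE: (E _ _) => //; last by rewrite !mxE.
by rewrite !mxNE Pproj_sym (Hsym _ _ EE).
Qed.

End P3.

Section P4.
Variable R : realType.
Variable d : nat.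

Definition dotv N (x y : 'cV[R]_N) : R := \sum_r x r 0 * y r 0.

Lemma dotrow n (u v : 'rV[R]_n) : \sum_a u 0 a * v 0 a = (u *m v^T) 0 0.
Proof. by rewrite mxE; apply: eq_bigr => a _; rewrite mxE. Qed.

Lemma Pproj_tr (x : 'rV[R]_d) : (Pproj x)^T = Pproj x.
Proof. by apply/matrixP => i j; rewrite mxE Pproj_sym. Qed.

Definition Qf (w : 'rV[R]_d) (P : 'M[R]_d) := \sum_a w 0 a * (w *m P) 0 a.

Lemma Qf_sq w P : P^T = P -> P *m P = P -> Qf w P = \sum_a (w *m P) 0 a ^+ 2.
Proof.
move=> Ptr PP; rewrite /Qf dotrow.
have -> : \sum_a (w *m P) 0 a ^+ 2 = \sum_a (w *m P) 0 a * (w *m P) 0 a.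
  by apply: eq_bigr => a _; rewrite expr2.
by rewrite dotrow !trmx_mul Ptr !mulmxA -(mulmxA w P P) PP.
Qed.

Lemma Qf_ge0 w P : P^T = P -> P *m P = P -> 0 <= Qf w P.
Proof. by move=> Ptr PP; rewrite Qf_sq //; apply: sumr_ge0 => a _; exact: sqr_ge0. Qed.

Lemma Qf_eq0 w P : P^T = P -> P *m P = P -> Qf w P = 0 -> w *m P = 0.
Proof.
move=> Ptr PP; rewrite Qf_sq // => /eqP; rewrite psumr_eq0; last by move=> a _; exact: sqr_ge0.
move/allP => H; apply/rowP => a; rewrite [RHS]mxE.
by have := H a (mem_index_enum a); rewrite /= sqrf_eq0 => /eqP.
Qed.

Lemma sym_sum n (E : rel 'I_n) (t : 'I_n -> 'I_n -> R) :
  (forall I J, E I J = E J I) ->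
  2 * \sum_I \sum_(J | E I J) t I J = \sum_I \sum_(J | E I J) (t I J + t J I).
Proof.
move=> Esym.
have H : \sum_I \sum_(J | E I J) t J I = \sum_I \sum_(J | E I J) t I J.
  under eq_bigr do rewrite big_mkcond.
  rewrite exchange_big /=; apply: eq_bigr => I _.
  by rewrite [RHS]big_mkcond; apply: eq_bigr => J _; rewrite Esym.
under [RHS]eq_bigr do rewrite big_split /=.
by rewrite big_split /= H mulr2n mulrDl mul1r.
Qed.

End P4.

Section P5.
Variable R : realType.
Variable d : nat.

Lemma split_l m n (i : 'I_m) : fintype.split (lshift n i) = inl i.
Proof. exact: (unsplitK (inl _ i)). Qed.
Lemma split_r m n (i : 'I_n) : fintype.split (rshift m i) = inr i.
Proof. exact: (unsplitK (inr _ i)). Qed.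

Definition extX nl nf (Xf : 'I_nf -> 'rV[R]_d) (J : 'I_(nl + nf)) : 'rV[R]_d :=
  match fintype.split J with inl _ => 0 | inr i => Xf i end.

Lemma quad_form nl nf (E : rel 'I_(nl + nf)) (g : 'I_(nl + nf) -> 'I_(nl + nf) -> 'rV[R]_d)
  (Xf : 'I_nf -> 'rV[R]_d) :
  (forall I J, E I J = E J I) -> (forall i, ~~ E i i) ->
  (forall I J, E I J -> Pproj (g J I) = Pproj (g I J)) ->
  2 * dotv (stack Xf) (Lff E g *m stack Xf) =
  \sum_I \sum_(J | E I J) Qf (@extX nl nf Xf I - @extX nl nf Xf J) (Pproj (g I J)).
Proof.
move=> Esym Eirr Hsym; set X := @extX nl nf Xf.
have hf : stack Xf = stack (fun i => X (rshift nl i)).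
  apply/matrixP => r c; case/mxvec_indexP: r => i a; rewrite ord1 !stackE.
  by rewrite /X /extX split_r.
have hl : stack (fun i => X (lshift nf i)) = 0.
  apply/matrixP => r c; case/mxvec_indexP: r => i a; rewrite ord1 !stackE.
  by rewrite /X /extX split_l !mxE.
have HL : Lff E g *m stack Xf = stack (fun i => frow E g X (rshift nl i)).
  by rewrite follower_stack // hl mulmx0 addr0 hf.
rewrite HL /dotv sum_mxvec.
have -> : \sum_(i < nf) \sum_(j < d) stack Xf (mxvec_index i j) 0 *
    stack (fun i0 => frow E g X (rshift nl i0)) (mxvec_index i j) 0 =
    \sum_I \sum_a X I 0 a * frow E g X I 0 a.
  rewrite [RHS]big_split_ord /= [X in _ = X + _]big1 ?add0r; last first.
    by move=> i _; apply: big1 => a _; rewrite /X /extX split_l mxE mul0r.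
  apply: eq_bigr => i _; apply: eq_bigr => a _.
  by rewrite !stackE /X /extX split_r.
have -> : \sum_I \sum_a X I 0 a * frow E g X I 0 a =
   \sum_I \sum_(J | E I J) (\sum_a X I 0 a * ((X I - X J) *m Pproj (g I J)) 0 a).
  apply: eq_bigr => I _; rewrite /frow.
  under eq_bigr do rewrite summxE mulr_sumr.
  by rewrite exchange_big.
rewrite sym_sum //; apply: eq_bigr => I _; apply: eq_bigr => J EIJ.
rewrite (Hsym _ _ EIJ) -opprB mulNmx -big_split /=; apply: eq_bigr => a _.
rewrite mulNmx !mxNE; set u := ((X J - X I) *m _) 0 a; by rewrite !mxE; ring.
Qed.

End P5.

Section P6.
Variable R : realType.
Variable d : nat.

Lemma enorm_sq (x : 'rV[R]_d) : enorm x ^+ 2 = \sum_k x 0 k ^+ 2.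
Proof. by rewrite /enorm sqr_sqrtr // sumr_ge0 // => k _; exact: sqr_ge0. Qed.

Lemma enorm_ge0 (x : 'rV[R]_d) : 0 <= enorm x.
Proof. exact: sqrtr_ge0. Qed.

Lemma enormZ (c : R) (x : 'rV[R]_d) : enorm (c *: x) = `|c| * enorm x.
Proof.
rewrite /enorm -sqrtr_sqr -sqrtrM ?sqr_ge0 // mulr_sumr; congr Num.sqrt.
by apply: eq_bigr => k _; rewrite mxE exprMn.
Qed.

Lemma enorm_gt0 (x : 'rV[R]_d) : x != 0 -> 0 < enorm x.
Proof.
move=> nx; rewrite /enorm sqrtr_gt0 lt_def sumr_ge0 ?andbT; last by move=> k _; exact: sqr_ge0.
apply: contra nx => /eqP /eqP; rewrite psumr_eq0; last by move=> k _; exact: sqr_ge0.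
move/allP => H; apply/eqP/rowP => k; rewrite [RHS]mxE.
by have := H k (mem_index_enum k); rewrite /= sqrf_eq0 => /eqP.
Qed.

Lemma bearing_unit n (q : 'M[R]_(n, d)) i j : row i q != row j q ->
  enorm (bearing_of q i j) = 1.
Proof.
move=> nq; have ne0 : row j q - row i q != 0 by rewrite subr_eq0 eq_sym.
have en := enorm_gt0 ne0.
rewrite /bearing_of enormZ ger0_norm ?invr_ge0 ?enorm_ge0 // mulVf //.
by rewrite gt_eqF.
Qed.

Lemma bearing_D n (q delta : 'M[R]_(n, d)) (i j : 'I_n) :
  row i q != row j q ->
  (row j delta - row i delta) *m Pproj (bearing_of q i j) = 0 ->
  'D_delta (fun q' : 'M[R]_(n, d) => bearing_of q' i j) q = 0.
Proof.
move=> nq Hw.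
have G1 := bearing_unit nq.
set e := row j q - row i q.
set w := row j delta - row i delta.
have ne0 : e != 0 by rewrite subr_eq0 eq_sym.
have en : 0 < enorm e := enorm_gt0 ne0.
set G := bearing_of q i j in G1 Hw *.
have eG : e = enorm e *: G.
  by rewrite /G /bearing_of -/e scalerA mulfV ?gt_eqF // scale1r.
set s := (w *m G^T) 0 0.
have ws : w = s *: G.
  have : w *m Pproj G = w - s *: G.
    rewrite /Pproj G1 expr1n invr1 scale1r mulmxBr mulmx1 mulmxA.
    by rewrite [w *m G^T]mx11_scalar mul_scalar_mx.
  by rewrite Hw => /eqP; rewrite eq_sym subr_eq0 => /eqP.
have key : forall h : R, 0 < h * s + enorm e -> bearing_of (h *: delta + q) i j = G.
  move=> h hpos.
  have HH : row j (h *: delta + q) - row i (h *: delta + q) = (h * s + enorm e) *: G.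
    rewrite scalerDl -scalerA -ws -eG /w /e; apply/rowP => k; rewrite !mxE; ring.
  rewrite /bearing_of HH enormZ G1 mulr1 ger0_norm ?ltW // scalerA mulVf ?gt_eqF //.
  by rewrite scale1r.
have s1 : 0 < `|s| + 1 by rewrite ltr_wpDl.
have r0 : 0 < enorm e / (`|s| + 1) by rewrite divr_gt0.
rewrite /derive; apply: cvg_lim => //; apply: cvg_near_cst.
near=> h.
have hlt : `|h| < enorm e / (`|s| + 1) by near: h; exact: dnbhs0_lt.
have hpos : 0 < h * s + enorm e.
  move: hlt; rewrite ltr_pdivlMr // => hlt.
  have : `|h * s| <= `|h| * (`|s| + 1) by rewrite normrM ler_wpM2l // lerDl.
  have : - (h * s) <= `|h * s| by rewrite -normrN ler_norm.
  lra.
rewrite /= key //; rewrite /G subrr scaler0 //.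
Unshelve. all: by end_near.
Qed.

End P6.

Section P7.
Variable R : realType.
Variable d : nat.

Lemma enormN (x : 'rV[R]_d) : enorm (- x) = enorm x.
Proof. by rewrite -scaleN1r enormZ normrN1 mul1r. Qed.

Lemma PprojN (x : 'rV[R]_d) : Pproj (- x) = Pproj x.
Proof.
rewrite /Pproj; have -> : (- x)^T = - x^T by apply/matrixP => i j; rewrite !mxE.
by rewrite enormN mulNmx mulmxN opprK.
Qed.

Lemma bearing_swap n (q : 'M[R]_(n, d)) I J : bearing_of q J I = - bearing_of q I J.
Proof. by rewrite /bearing_of -opprB enormN scalerN. Qed.

Lemma Pproj_idem (x : 'rV[R]_d) : enorm x = 1 -> Pproj x *m Pproj x = Pproj x.
Proof.
move=> x1.
have xx : x *m x^T = 1%:M.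
  apply/matrixP => i j; rewrite !ord1 mxE.
  have := enorm_sq x; rewrite x1 expr1n => ->.
  by rewrite mxE /=; apply: eq_bigr => k _; rewrite mxE expr2.
rewrite /Pproj x1 expr1n invr1 !scale1r mulmxBl !mulmxBr !mul1mx !mulmx1.
by rewrite !mulmxA -(mulmxA _ x) xx mulmx1 subrr subr0.
Qed.

Lemma stack_row m (x : 'cV[R]_(m * d)) :
  x = stack (fun i => \row_a x (mxvec_index i a) 0).
Proof.
apply/matrixP => r c; case/mxvec_indexP: r => i a; rewrite ord1 stackE.
by rewrite mxE.
Qed.

Lemma Lff_props nl nf (E : rel 'I_(nl + nf)) (g : 'I_(nl + nf) -> 'I_(nl + nf) -> 'rV[R]_d)
   (q : 'M[R]_(nl + nf, d)) :
  (2 <= nl)%N -> (forall I J, E I J = E J I) -> (forall I, ~~ E I I) ->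
  (forall I J, E I J -> bearing_of q I J = g I J) -> inf_bearing_rigid E q ->
  [/\ (forall I J, E I J -> Pproj (g J I) = Pproj (g I J)),
      (forall I J, E I J -> Pproj (g I J) *m Pproj (g I J) = Pproj (g I J)),
      (forall x, 0 <= dotv x (Lff E g *m x)) &
      (forall x, dotv x (Lff E g *m x) = 0 -> x = 0)].
Proof.
move=> nl2 Esym Eirr Hg [Hdist Hrig].
have Hsym : forall I J, E I J -> Pproj (g J I) = Pproj (g I J).
  move=> I J EIJ; rewrite -(Hg _ _ EIJ) -(Hg J I); last by rewrite Esym.
  by rewrite bearing_swap PprojN.
have Hid : forall I J, E I J -> Pproj (g I J) *m Pproj (g I J) = Pproj (g I J).
  move=> I J EIJ; apply: Pproj_idem; rewrite -Hg //; apply: bearing_unit.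
  apply: Hdist; apply: contraNneq (Eirr I) => IJ; by rewrite {2}IJ.
have Qge0 : forall I J, E I J -> forall w, 0 <= Qf w (Pproj (g I J)).
  by move=> I J EIJ w; apply: Qf_ge0; [exact: Pproj_tr | exact: Hid].
split => // [x|x x0].
  rewrite [X in dotv X _]stack_row [X in _ *m X]stack_row.
  have := @quad_form R d nl nf E g (fun i => \row_a x (mxvec_index i a) 0) Esym Eirr Hsym.
  move=> H; have : 0 <= 2 * dotv (stack (fun i => \row_a x (mxvec_index i a) 0))
     (Lff E g *m stack (fun i => \row_a x (mxvec_index i a) 0)).
    rewrite H; apply: sumr_ge0 => I _; apply: sumr_ge0 => J EIJ; exact: Qge0.
  by rewrite pmulr_rge0.
set Xf := fun i => \row_a x (mxvec_index i a) 0.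
have hx : x = stack Xf := stack_row x.
have H := @quad_form R d nl nf E g Xf Esym Eirr Hsym.
rewrite -hx x0 mulr0 in H.
set X := @extX R d nl nf Xf in H.
have HQ : forall I J, E I J -> (X I - X J) *m Pproj (g I J) = 0.
  move=> I J EIJ; apply: Qf_eq0; [exact: Pproj_tr | exact: Hid | ].
  have H1 : forall I0, \sum_(J0 | E I0 J0) Qf (X I0 - X J0) (Pproj (g I0 J0)) = 0.
    move=> I0; apply: (psumr_eq0P _ (esym H)) => // I1 _.
    by apply: sumr_ge0 => J1 EJ; exact: Qge0.
  by apply: (psumr_eq0P _ (H1 I)) => // J1 EJ; exact: Qge0.
set delta := \matrix_(J < nl + nf) X J.
have rowd : forall J, row J delta = X J by move=> J; rewrite rowK.
have [a [c hd]] : exists a c, delta = \matrix_(i < nl + nf) a + c *: q.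
  apply/Hrig => I J EIJ _; apply: bearing_D.
    by apply: Hdist; apply: contraNneq (Eirr I) => IJ; rewrite {2}IJ.
  by rewrite !rowd Hg // -opprB mulNmx HQ // oppr0.
have l0 : (0 < nl)%N by apply: ltn_trans nl2.
set L0 := lshift nf (Ordinal l0). set L1 := lshift nf (Ordinal nl2).
have XL : forall i, X (lshift nf i) = 0 by move=> i; rewrite /X /extX split_l.
have rowE : forall J, row J delta = a + c *: row J q.
  by move=> J; rewrite hd; apply/rowP => k; rewrite !mxE.
have e0 : a + c *: row L0 q = 0 by rewrite -rowE rowd XL.
have e1 : a + c *: row L1 q = 0 by rewrite -rowE rowd XL.
have L01 : L0 != L1 by rewrite /L0 /L1 (inj_eq (@lshift_inj _ _)).
have c0 : c = 0.
  have : c *: row L0 q = c *: row L1 q by apply: (addrI a); rewrite e0 e1.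
  move/eqP; rewrite -subr_eq0 -scalerBr scaler_eq0 subr_eq0 (negbTE (Hdist L0 L1 L01)) orbF.
  by move/eqP.
have a0 : a = 0 by move: e0; rewrite c0 scale0r addr0.
rewrite hx; apply/matrixP => r k; case/mxvec_indexP: r => i b; rewrite ord1 stackE.
have : X (rshift nl i) = 0 by rewrite -rowd rowE a0 c0 scale0r addr0.
rewrite /X /extX split_r => ->; by rewrite !mxE.
Qed.

End P7.

Section P8.
Variable R : realType.
Variable N : nat.
Implicit Types (x y z : 'cV[R]_N) (A L : 'M[R]_N).

Lemma dotvC x y : dotv x y = dotv y x.
Proof. by apply: eq_bigr => r _; rewrite mulrC. Qed.

Lemma dotvDr x y z : dotv x (y + z) = dotv x y + dotv x z.
Proof. by rewrite /dotv -big_split; apply: eq_bigr => r _; rewrite mxE mulrDr. Qed.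

Lemma dotvZr x y (c : R) : dotv x (c *: y) = c * dotv x y.
Proof. by rewrite /dotv mulr_sumr; apply: eq_bigr => r _; rewrite mxE; ring. Qed.

Lemma dotvDl x y z : dotv (y + z) x = dotv y x + dotv z x.
Proof. by rewrite dotvC dotvDr !(dotvC x). Qed.

Lemma dotvZl x y (c : R) : dotv (c *: y) x = c * dotv y x.
Proof. by rewrite dotvC dotvZr dotvC. Qed.

Lemma dotvNr x y : dotv x (- y) = - dotv x y.
Proof. by rewrite -scaleN1r dotvZr mulN1r. Qed.

Lemma dotvNl x y : dotv (- y) x = - dotv y x.
Proof. by rewrite dotvC dotvNr dotvC. Qed.

Lemma dotv0r x : dotv x 0 = 0.
Proof. by apply: big1 => r _; rewrite mxE mulr0. Qed.

Lemma dotv_mul x A y : dotv x (A *m y) = \sum_r \sum_s x r 0 * A r s * y s 0.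
Proof. by apply: eq_bigr => r _; rewrite mxE mulr_sumr; apply: eq_bigr => s _; rewrite mulrA. Qed.

Lemma dotv_tr x A y : dotv x (A *m y) = dotv (A^T *m x) y.
Proof.
rewrite dotv_mul dotvC dotv_mul exchange_big /=; apply: eq_bigr => r _.
by apply: eq_bigr => s _; rewrite mxE; ring.
Qed.

Lemma dotv_sym L x y : L^T = L -> dotv x (L *m y) = dotv y (L *m x).
Proof. by move=> Ls; rewrite dotv_tr Ls dotvC. Qed.

Lemma dotv_ge0 x : 0 <= dotv x x.
Proof. by apply: sumr_ge0 => r _; rewrite -expr2 sqr_ge0. Qed.

Lemma entry_sq x r : x r 0 ^+ 2 <= dotv x x.
Proof.
rewrite /dotv (bigD1 r) //= expr2 lerDl; apply: sumr_ge0 => s _.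
by rewrite -expr2 sqr_ge0.
Qed.

Lemma entry_prod x r s : `|x r 0| * `|x s 0| <= dotv x x.
Proof.
have h1 := entry_sq x r; have h2 := entry_sq x s.
have : 0 <= (`|x r 0| - `|x s 0|) ^+ 2 by exact: sqr_ge0.
rewrite -[x r 0 ^+ 2]real_normK ?num_real // -[x s 0 ^+ 2]real_normK ?num_real // in h1 h2.
nra.
Qed.

Lemma quad_bound A x : `|dotv x (A *m x)| <= (\sum_r \sum_s `|A r s|) * dotv x x.
Proof.
rewrite dotv_mul mulr_suml; apply: le_trans (ler_norm_sum _ _ _) _.
apply: ler_sum => r _; rewrite mulr_suml; apply: le_trans (ler_norm_sum _ _ _) _.
apply: ler_sum => s _; rewrite !normrM.
have := entry_prod x r s; have := normr_ge0 (A r s); nra.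
Qed.

Lemma disc_le (a b c : R) : 0 <= c -> (forall t, 0 <= a + 2 * t * b + t ^+ 2 * c) ->
  b ^+ 2 <= a * c.
Proof.
move=> c0 H; have a0 : 0 <= a by have := H 0; rewrite mulr0 mul0r expr0n /= mul0r !addr0.
have [cz|cp] := eqVneq c 0.
  case: (eqVneq b 0) => [->|bn]; first by rewrite expr0n /= mulr_ge0.
  have := H (- (a + 1) / (2 * b)); rewrite cz mulr0 addr0.
  have -> : 2 * (- (a + 1) / (2 * b)) * b = - (a + 1) by field; rewrite bn.
  lra.
have cpos : 0 < c by rewrite lt_def cp c0.
have := H (- b / c).
have -> : a + 2 * (- b / c) * b + (- b / c) ^+ 2 * c = a - b ^+ 2 / c.
  by field; rewrite cp.
rewrite subr_ge0 ler_pdivrMr //.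
Qed.

End P8.

Section P9.
Variable R : realType.
Variable N : nat.
Implicit Types (x y z : 'cV[R]_N) (A L : 'M[R]_N).

Lemma Lunit L : (forall x, L *m x = 0 -> x = 0) -> L^T = L -> L \in unitmx.
Proof.
move=> inj Ls; rewrite -row_free_unit -kermx_eq0; apply/eqP/row_matrixP => i; rewrite row0.
set u := row i (kermx L).
have hu : u *m L = 0 by rewrite /u -row_mul mulmx_ker row0.
apply: trmx_inj; rewrite trmx0; apply: inj; rewrite -[X in X *m _]Ls -trmx_mul hu trmx0.
done.
Qed.

Lemma coercive L : L^T = L -> (forall x, 0 <= dotv x (L *m x)) ->
  (forall x, dotv x (L *m x) = 0 -> x = 0) ->
  L \in unitmx /\ exists m, 0 < m /\ forall x, m * dotv x x <= dotv x (L *m x).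
Proof.
move=> Ls psd inj.
have Lu : L \in unitmx by apply: Lunit => // x Lx; apply: inj; rewrite Lx dotv0r.
split=> //.
set C := \sum_r \sum_s `|invmx L r s|.
have C0 : 0 <= C by apply: sumr_ge0 => r _; apply: sumr_ge0 => s _; exact: normr_ge0.
have C1 : 0 < C + 1 by rewrite ltr_wpDl.
exists (C + 1)^-1; split; first by rewrite invr_gt0.
move=> x.
have key : dotv x x <= (C + 1) * dotv x (L *m x).
  set y := invmx L *m x.
  have Ly : L *m y = x by rewrite mulmxA mulmxV // mul1mx.
  have cs : dotv x (L *m y) ^+ 2 <= dotv x (L *m x) * dotv y (L *m y).
    apply: disc_le; first exact: psd.
    move=> t; have := psd (x + t *: y).
    rewrite mulmxDr -scalemxAr dotvDl !dotvDr !dotvZl !dotvZr (dotv_sym y x Ls).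
    set a := dotv x (L *m x); set b := dotv x (L *m y); set c := dotv y (L *m y).
    have -> : a + 2 * t * b + t ^+ 2 * c = a + t * b + (t * b + t * (t * c)) by ring.
    done.
  rewrite Ly in cs.
  have hyx : dotv y x <= C * dotv x x.
    rewrite dotvC; apply: le_trans (ler_norm _) _; exact: quad_bound.
  have q0 := psd x; have S0 := dotv_ge0 x.
  set S := dotv x x in cs hyx S0 *; set q := dotv x (L *m x) in cs q0 *.
  rewrite expr2 in cs.
  have cs2 : S * S <= (q * C) * S.
    apply: le_trans cs _; rewrite -mulrA; exact: ler_wpM2l.
  case: (eqVneq S 0) => [->|Sn]; first by apply: mulr_ge0 => //; exact: ltW.
  have Sp : 0 < S by rewrite lt_def Sn S0.
  rewrite ler_pM2r // in cs2.
  apply: le_trans cs2 _; nra.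
by rewrite mulrC ler_pdivrMr // mulrC.
Qed.

End P9.

Section P10.
Variable R : realType.

Lemma is_derive_entry m n (X : R -> 'M[R]_(m, n)) (X' : 'M[R]_(m, n)) t v i j :
  is_derive t v X X' -> is_derive t v (fun s => X s i j) (X' i j).
Proof.
move=> [dX vX]; have dE := (derivable_mxP X t v).1 dX.
apply: DeriveDef; first exact: dE.
by rewrite -vX derive_mx // mxE.
Qed.

Lemma is_derive_mx m n (X : R -> 'M[R]_(m, n)) (X' : 'M[R]_(m, n)) t v :
  (forall i j, is_derive t v (fun s => X s i j) (X' i j)) -> is_derive t v X X'.
Proof.
move=> H; have dX : derivable X t v.
  by apply/derivable_mxP => i j; case: (H i j).
apply: DeriveDef => //; rewrite derive_mx //; apply/matrixP => i j; rewrite mxE.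
by case: (H i j).
Qed.

Lemma is_derive_sumf n (h : 'I_n -> R -> R) (dh : 'I_n -> R) t v :
  (forall i, is_derive t v (h i) (dh i)) ->
  is_derive t v (fun s => \sum_(i < n) h i s) (\sum_(i < n) dh i).
Proof.
move=> H; have := is_derive_sum H.
by rewrite fct_sumE.
Qed.

Lemma is_derive_mulf (f g : R -> R) df dg t v :
  is_derive t v f df -> is_derive t v g dg ->
  is_derive t v (fun s => f s * g s) (df * g t + f t * dg).
Proof.
move=> Hf Hg; have := is_deriveM Hf Hg.
move=> [d1 d2]; apply: DeriveDef; first exact: d1.
by rewrite d2 addrC [df * _]mulrC.
Qed.

Lemma is_derive_dotv N (X Y : R -> 'cV[R]_N) X' Y' t v :
  is_derive t v X X' -> is_derive t v Y Y' ->
  is_derive t v (fun s => dotv (X s) (Y s)) (dotv X' (Y t) + dotv (X t) Y').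
Proof.
move=> HX HY; rewrite /dotv -big_split /=; apply: is_derive_sumf => r.
exact: is_derive_mulf (is_derive_entry r 0 HX) (is_derive_entry r 0 HY).
Qed.

Lemma is_derive_mulmx m n (A : 'M[R]_(m, n)) (X : R -> 'cV[R]_n) X' t v :
  is_derive t v X X' -> is_derive t v (fun s => A *m X s) (A *m X').
Proof.
move=> HX; apply: is_derive_mx => i j; rewrite mxE.
have -> : (fun s => (A *m X s) i j) = (fun s => \sum_k A i k * X s k j).
  by apply/funext => s; rewrite mxE.
apply: is_derive_sumf => k.
have := is_derive_mulf (is_derive_cst (A i k) t v) (is_derive_entry k j HX).
by rewrite mul0r add0r.
Qed.

Lemma is_derive_stack d m (f : 'I_m -> R -> 'rV[R]_d) (f' : 'I_m -> 'rV[R]_d) t v :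
  (forall i, is_derive t v (f i) (f' i)) ->
  is_derive t v (fun s => stack (fun i => f i s)) (stack f').
Proof.
move=> H; apply: is_derive_mx => r c; case/mxvec_indexP: r => i a.
rewrite ord1 stackE.
have -> : (fun s => stack (fun i => f i s) (mxvec_index i a) 0) = (fun s => f i s 0 a).
  by apply/funext => s; rewrite stackE.
exact: is_derive_entry.
Qed.

End P10.

Section P11.
Variable R : realType.

Lemma mono_dec (f f' : R -> R) (a b : R) : 0 < a -> a <= b ->
  (forall t : R, 0 < t -> is_derive t 1 f (f' t)) -> (forall t, 0 < t -> f' t <= 0) ->
  f b <= f a.
Proof.
move=> a0 ab Hd Hle.
have der : forall x, a <= x -> derivable f x 1.
  by move=> x ax; case: (Hd x (lt_le_trans a0 ax)).
apply: (@ler0_derive1_le_cc R f a b) => //.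
- by move=> x; rewrite in_itv /= => /andP[ax _]; apply: der; exact: ltW.
- move=> x; rewrite in_itv /= => /andP[ax _].
  have [_ dv] := Hd x (lt_trans a0 ax); rewrite derive1E dv; apply: Hle; exact: lt_trans a0 ax.
- apply: derivable_within_continuous => x; rewrite in_itv /= => /andP[ax _].
  exact: der.
- by rewrite in_itv /= lexx ab.
- by rewrite in_itv /= lexx ab.
Qed.

Lemma mono_inc (f f' : R -> R) (a b : R) : 0 < a -> a <= b ->
  (forall t : R, 0 < t -> is_derive t 1 f (f' t)) -> (forall t, 0 < t -> 0 <= f' t) ->
  f a <= f b.
Proof.
move=> a0 ab Hd Hle.
have := @mono_dec (fun s => - f s) (fun s => - f' s) a b a0 ab.
rewrite lerN2; apply.
  by move=> t t0; apply: is_deriveN; exact: Hd.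
by move=> t t0; rewrite oppr_le0; exact: Hle.
Qed.

End P11.

Section P12.
Variable R : realType.

Lemma is_derive_expc (c t : R) :
  is_derive t 1 (fun s => expR (c * s)) (expR (c * t) * c).
Proof.
have h1 : is_derive t 1 (fun s : R => c * s) c.
  have := is_derive_mulf (is_derive_cst c t 1) (is_derive_id t 1).
  by rewrite mul0r add0r mulr1.
exact: (is_derive1_comp (f := expR) (g := fun s => c * s)).
Qed.

Lemma expRNK (x : R) : expR x * expR (- x) = 1.
Proof. by rewrite expRN mulfV // gt_eqF // expR_gt0. Qed.

Lemma expo_bound (V V' : R -> R) (lam Lam : R) :
  0 < lam -> 0 <= Lam ->
  (forall t : R, 0 < t -> is_derive t 1 V (V' t)) ->
  (forall t : R, 0 < t -> 0 <= V t) ->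
  (forall t, 0 < t -> V' t <= - lam * V t) ->
  (forall t, 0 < t -> - Lam * V t <= V' t) ->
  exists K, forall t, 0 < t -> V t <= K * expR (- lam * t).
Proof.
move=> l0 L0 HV V0 Hup Hlo.
have dW1 : forall t : R, 0 < t -> is_derive t 1 (fun s => V s * expR (lam * s))
    (V' t * expR (lam * t) + V t * (expR (lam * t) * lam)).
  by move=> t t0; exact: is_derive_mulf (HV t t0) (is_derive_expc lam t).
have dW2 : forall t : R, 0 < t -> is_derive t 1 (fun s => V s * expR (Lam * s))
    (V' t * expR (Lam * t) + V t * (expR (Lam * t) * Lam)).
  by move=> t t0; exact: is_derive_mulf (HV t t0) (is_derive_expc Lam t).
have V1 := V0 1 ltr01.
have eL1 : 1 <= expR Lam by rewrite -expR0 ler_expR.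
have el0 := expR_gt0 lam.
exists (V 1 * expR lam * expR Lam) => t t0.
have B0 := expR_gt0 (- lam * t).
case: (leP 1 t) => [t1|t1].
  have := mono_dec ltr01 t1 dW1.
  move=> /(_ _) H; have {H} H : V t * expR (lam * t) <= V 1 * expR (lam * 1).
    apply: H => s s0; have := Hup s s0; have := expR_gt0 (lam * s); nra.
  rewrite mulr1 in H.
  have AB := expRNK (lam * t); rewrite -mulNr in AB.
  have A0 := expR_gt0 (lam * t).
  have : V t = V t * expR (lam * t) * expR (- lam * t) by rewrite -mulrA AB mulr1.
  move=> ->.
  have : V t * expR (lam * t) * expR (- lam * t) <= V 1 * expR lam * expR (- lam * t).
    by rewrite ler_pM2r.
  move=> h; apply: le_trans h _; rewrite ler_pM2r //.
  by rewrite ler_peMr // mulr_ge0 // ltW.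
have tl1 : t <= 1 := ltW t1.
have := mono_inc t0 tl1 dW2.
move=> /(_ _) H; have {H} H : V t * expR (Lam * t) <= V 1 * expR (Lam * 1).
  apply: H => s s0; have := Hlo s s0; have := expR_gt0 (Lam * s); nra.
rewrite mulr1 in H.
have e1 : 1 <= expR (Lam * t) by rewrite -expR0 ler_expR mulr_ge0 // ltW.
have e2 : 1 <= expR lam * expR (- lam * t).
  rewrite -expRD -expR0 ler_expR mulNr -{1}[lam]mulr1 -mulrBr.
  by apply: mulr_ge0; [exact: ltW | rewrite subr_ge0].
have Vt := V0 t t0.
have h1 : V t <= V 1 * expR Lam.
  apply: le_trans H; rewrite -{1}[V t]mulr1; exact: ler_wpM2l.
apply: (le_trans h1).
have -> : V 1 * expR lam * expR Lam * expR (- lam * t) =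
  (V 1 * expR Lam) * (expR lam * expR (- lam * t)) by ring.
rewrite -{1}[V 1 * expR Lam]mulr1; apply: ler_wpM2l => //.
by rewrite mulr_ge0 // (le_trans ler01 eL1).
Qed.

End P12.

Section P13.
Variable R : realType.

Lemma scalar_bounds (a b k e f m kP kI Mu eps : R) :
  0 < m -> 0 < kP -> 0 < kI -> 0 < eps -> eps <= 1/2 -> eps <= m * kI / 2 ->
  eps <= m * kP / 2 -> 0 <= a -> 0 <= k -> m * k <= b ->
  - (a + k) <= 2 * e -> 2 * e <= a + k -> m * a <= f -> f <= Mu * a ->
  [/\ a / 2 + kI / 2 * b <= a + 2 * eps * e + (kI + eps * kP) * b,
      a + 2 * eps * e + (kI + eps * kP) * b <= 3 / 2 * a + (3 / 2 * kI + eps * kP) * b,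
      - 2 * kP * f + 2 * eps * a - 2 * eps * kI * b <= - (kP * m) * a - 2 * eps * kI * b &
      - 2 * kP * Mu * a - 2 * eps * kI * b <= - 2 * kP * f + 2 * eps * a - 2 * eps * kI * b].
Proof.
move=> m0 kP0 kI0 e0 e12 emI emP a0 k0 kb e1 e2 fa fb.
have ek : eps * k <= kI / 2 * b.
  have : eps * k <= m * kI / 2 * k by apply: ler_wpM2r.
  move=> h; apply: le_trans h _.
  have -> : m * kI / 2 * k = kI / 2 * (m * k) by ring.
  by apply: ler_wpM2l => //; apply: divr_ge0 => //; exact: ltW.
have E1 : - (eps * (a + k)) <= 2 * eps * e.
  have := ler_wpM2l (ltW e0) e1; rewrite mulrN; move=> h; apply: le_trans h _.
  by rewrite mulrA [eps * 2]mulrC.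
have E2 : 2 * eps * e <= eps * (a + k).
  have := ler_wpM2l (ltW e0) e2; move=> h; apply: le_trans _ h.
  by rewrite mulrA [eps * 2]mulrC.
have bb : 0 <= b by apply: le_trans kb; apply: mulr_ge0 => //; exact: ltW.
split.
- have : eps * a <= 1 / 2 * a := ler_wpM2r a0 e12.
  have : 0 <= eps * kP * b by apply: mulr_ge0 => //; apply: mulr_ge0; exact: ltW.
  lra.
- have : eps * a <= 1 / 2 * a := ler_wpM2r a0 e12.
  lra.
- have : 2 * eps * a <= kP * m * a.
    have := ler_wpM2r a0 emP; move=> h.
    have -> : 2 * eps * a = 2 * (eps * a) by ring.
    have -> : kP * m * a = 2 * (m * kP / 2 * a) by field.
    by apply: ler_wpM2l.
  have : 2 * kP * (m * a) <= 2 * kP * f by apply: ler_wpM2l => //; apply: mulr_ge0 => //; exact: ltW.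
  lra.
- have : 2 * kP * f <= 2 * kP * (Mu * a) by apply: ler_wpM2l => //; apply: mulr_ge0 => //; exact: ltW.
  have : 0 <= 2 * eps * a by apply: mulr_ge0 => //; apply: mulr_ge0 => //; exact: ltW.
  lra.
Qed.

End P13.

Section P14.
Variable R : realType.

Lemma is_derive_addf (f g : R -> R) df dg (c : R) t v :
  is_derive t v f df -> is_derive t v g dg ->
  is_derive t v (fun s => f s + c * g s) (df + c * dg).
Proof.
move=> Hf Hg; have Hcg := is_derive_mulf (is_derive_cst c t v) Hg.
rewrite mul0r add0r in Hcg.
have := is_deriveD Hf Hcg; move=> [d1 d2]; apply: DeriveDef; first exact: d1.
by rewrite d2.
Qed.

Lemma ode_decay N (L : 'M[R]_N) (m kP kI : R) (th de : R -> 'cV[R]_N) :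
  L^T = L -> 0 < m -> (forall x, m * dotv x x <= dotv x (L *m x)) -> 0 < kP -> 0 < kI ->
  (forall t : R, 0 < t -> is_derive t 1 th (de t)) ->
  (forall t : R, 0 < t -> is_derive t 1 de (- kP *: (L *m de t) - kI *: (L *m th t))) ->
  exists K lam, 0 < lam /\ forall t : R, 0 < t ->
     dotv (de t) (de t) <= K * expR (- lam * t) /\ dotv (th t) (th t) <= K * expR (- lam * t).
Proof.
move=> Ls m0 coer kP0 kI0 Hth Hde.
set Mu := \sum_r \sum_s `|L r s|.
have Mu0 : 0 <= Mu by apply: sumr_ge0 => r _; apply: sumr_ge0 => s _; exact: normr_ge0.
have fup : forall x, dotv x (L *m x) <= Mu * dotv x x.
  by move=> x; apply: le_trans (ler_norm _) _; exact: quad_bound.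
set eps := Num.min (1 / 2) (Num.min (m * kI / 2) (m * kP / 2)).
have eps0 : 0 < eps.
  by rewrite /eps !lt_min !divr_gt0 ?mulr_gt0 ?ltr01 ?ltr0n.
have eps1 : eps <= 1 / 2 by rewrite /eps ge_min lexx.
have eps2 : eps <= m * kI / 2 by rewrite /eps ge_min ge_min lexx orbT.
have eps3 : eps <= m * kP / 2 by rewrite /eps ge_min ge_min lexx !orbT.
set V := fun s => dotv (de s) (de s) + 2 * eps * dotv (th s) (de s)
   + (kI + eps * kP) * dotv (th s) (L *m th s).
set V' := fun s => - 2 * kP * dotv (de s) (L *m de s) + 2 * eps * dotv (de s) (de s)
   - 2 * eps * kI * dotv (th s) (L *m th s).
have dV : forall t : R, 0 < t -> is_derive t 1 V (V' t).
  move=> t t0.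
  have HA := is_derive_dotv (Hde t t0) (Hde t t0).
  have HE := is_derive_dotv (Hth t t0) (Hde t t0).
  have HB := is_derive_dotv (Hth t t0) (is_derive_mulmx L (Hth t t0)).
  have H1 := is_derive_addf (2 * eps) HA HE.
  have H2 := is_derive_addf (kI + eps * kP) H1 HB.
  move: H2 => [d1 d2]; apply: DeriveDef; first exact: d1.
  rewrite d2 /V'.
  rewrite !dotvDl !dotvDr !dotvZl !dotvZr !dotvNl !dotvNr.
  rewrite !dotvZl !dotvZr (dotvC (L *m de t)) (dotvC (L *m th t)).
  rewrite (dotv_sym (de t) (th t) Ls).
  ring.
have SB : forall s : R,
  [/\ dotv (de s) (de s) / 2 + kI / 2 * dotv (th s) (L *m th s) <= V s,
      V s <= 3 / 2 * dotv (de s) (de s) + (3 / 2 * kI + eps * kP) * dotv (th s) (L *m th s),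
      V' s <= - (kP * m) * dotv (de s) (de s) - 2 * eps * kI * dotv (th s) (L *m th s) &
      - 2 * kP * Mu * dotv (de s) (de s) - 2 * eps * kI * dotv (th s) (L *m th s) <= V' s].
  move=> s.
  have hp := dotv_ge0 (th s + de s); have hm := dotv_ge0 (th s - de s).
  rewrite !dotvDl !dotvDr !dotvNl !dotvNr (dotvC (de s) (th s)) in hp hm.
  apply: (@scalar_bounds R (dotv (de s) (de s)) (dotv (th s) (L *m th s))
     (dotv (th s) (th s)) (dotv (th s) (de s)) (dotv (de s) (L *m de s)) m kP kI Mu eps) => //.
  - exact: dotv_ge0.
  - exact: dotv_ge0.
  - lra.
  - lra.
have b0 : forall s, 0 <= dotv (th s) (L *m th s).
  move=> s; apply: le_trans (coer _); apply: mulr_ge0; [exact: ltW | exact: dotv_ge0].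
set C2 := 3 / 2 * kI + eps * kP.
have C20 : 0 < C2 by rewrite /C2 ltr_pwDr ?mulr_ge0 ?ltW // mulr_gt0 // divr_gt0 // ltr0n.
set lam := Num.min (2 * kP * m / 3) (2 * eps * kI / C2).
have lam0 : 0 < lam.
  by rewrite /lam lt_min !divr_gt0 ?mulr_gt0 ?ltr0n.
have lam1 : lam * (3 / 2) <= kP * m.
  have : lam <= 2 * kP * m / 3 by rewrite /lam ge_min lexx.
  move=> h; have := ler_wpM2r (_ : 0 <= 3 / 2) h.
  have -> : 2 * kP * m / 3 * (3 / 2) = kP * m :> R by field.
  by apply; rewrite divr_ge0 ?ler0n.
have lam2 : lam * C2 <= 2 * eps * kI.
  have : lam <= 2 * eps * kI / C2 by rewrite /lam ge_min lexx orbT.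
  by rewrite ler_pdivlMr.
set Lam := 4 * kP * Mu + 4 * eps.
have Lam0 : 0 <= Lam by rewrite /Lam addr_ge0 ?mulr_ge0 ?ler0n // ltW.
have [K0 HK0] : exists K, forall t : R, 0 < t -> V t <= K * expR (- lam * t).
  apply: (expo_bound lam0 Lam0 dV).
  - move=> s s0; case: (SB s) => Vlo _ _ _.
    have := b0 s; have := dotv_ge0 (de s); have := kI0; nra.
  - move=> s s0; case: (SB s) => _ Vhi V'hi _.
    set a := dotv (de s) (de s) in Vhi V'hi *; set b := dotv (th s) (L *m th s) in Vhi V'hi *.
    have a0 : 0 <= a := dotv_ge0 _. have bb := b0 s; rewrite -/b in bb.
    have h1 : lam * V s <= lam * (3 / 2 * a + C2 * b) := ler_wpM2l (ltW lam0) Vhi.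
    have h2 : lam * (3 / 2 * a + C2 * b) <= kP * m * a + 2 * eps * kI * b.
      have -> : lam * (3 / 2 * a + C2 * b) = (lam * (3 / 2)) * a + (lam * C2) * b by ring.
      by apply: lerD; apply: ler_wpM2r.
    rewrite mulNr; lra.
  - move=> s s0; case: (SB s) => Vlo _ _ V'lo.
    set a := dotv (de s) (de s) in Vlo V'lo *; set b := dotv (th s) (L *m th s) in Vlo V'lo *.
    have a0 : 0 <= a := dotv_ge0 _. have bb := b0 s; rewrite -/b in bb.
    have h1 : Lam * (a / 2 + kI / 2 * b) <= Lam * V s := ler_wpM2l Lam0 Vlo.
    have h2 : 2 * kP * Mu * a + 2 * eps * kI * b <= Lam * (a / 2 + kI / 2 * b).
      have -> : Lam * (a / 2 + kI / 2 * b) =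
         2 * kP * Mu * a + 2 * eps * a + (2 * kP * Mu * kI * b + 2 * eps * kI * b) by rewrite /Lam; field.
      have : 0 <= 2 * eps * a by rewrite mulr_ge0 // mulr_ge0 // ltW.
      have : 0 <= 2 * kP * Mu * kI * b by rewrite !mulr_ge0 // ltW.
      lra.
    rewrite mulNr; lra.
have K00 : 0 <= K0.
  have := HK0 1 ltr01; case: (SB 1) => Vlo _ _ _.
  have := b0 1; have := dotv_ge0 (de 1); have := expR_gt0 (- lam * 1); nra.
exists (2 * K0 + 2 * K0 / (kI * m)), lam; split => // t t0.
have HV := HK0 t t0; case: (SB t) => Vlo _ _ _.
have e0 := expR_gt0 (- lam * t).
set a := dotv (de t) (de t) in Vlo *; set b := dotv (th t) (L *m th t) in Vlo *.
set k := dotv (th t) (th t); set ex := expR (- lam * t) in HV e0 *.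
have a0 : 0 <= a := dotv_ge0 _. have bb := b0 t; rewrite -/b in bb.
have k0 : 0 <= k := dotv_ge0 _.
have mk : m * k <= b := coer (th t).
have Kp : 0 <= 2 * K0 / (kI * m) by rewrite divr_ge0 ?mulr_ge0 // ltW // mulr_gt0.
split.
  have : 0 <= 2 * K0 / (kI * m) * ex by rewrite mulr_ge0 // ltW.
  nra.
have hk : kI * m * k <= 2 * (K0 * ex).
  have : kI * (m * k) <= kI * b by rewrite ler_wpM2l // ltW.
  rewrite mulrA; lra.
have : k <= 2 * K0 / (kI * m) * ex.
  rewrite mulrAC ler_pdivlMr ?mulr_gt0 //; lra.
have : 0 <= 2 * K0 * ex by rewrite mulr_ge0 ?mulr_ge0 // ltW.
nra.
Qed.

End P14.

Section P15.
Variable R : realType.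

Lemma mxnorm_le m n (x : 'M[R]_(m, n)) B : 0 <= B -> (forall i j, `|x i j| <= B) -> `|x| <= B.
Proof.
move=> B0 H; rewrite /Num.Def.normr /= mx_normrE; apply: bigmax_le => // ij _; exact: H.
Qed.

Lemma norm_of_dotv N (x : 'cV[R]_N) B : 0 <= B -> dotv x x <= B ^+ 2 -> `|x| <= B.
Proof.
move=> B0 h; apply: mxnorm_le => // r c; rewrite ord1.
have := le_trans (entry_sq x r) h; rewrite -real_normK ?num_real // => h2.
have := normr_ge0 (x r 0); nra.
Qed.

Lemma norm_mul_dotv N M (A : 'M[R]_(M, N)) (x : 'cV[R]_N) B :
  0 <= B -> dotv x x <= B ^+ 2 -> `|A *m x| <= (\sum_r \sum_s `|A r s|) * B.
Proof.
move=> B0 h; apply: mxnorm_le.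
  by apply: mulr_ge0 => //; apply: sumr_ge0 => r _; apply: sumr_ge0 => s _; exact: normr_ge0.
move=> r c; rewrite ord1 mxE.
have hs : forall s, `|x s 0| <= B.
  move=> s; have := le_trans (entry_sq x s) h; rewrite -real_normK ?num_real // => h2.
  have := normr_ge0 (x s 0); nra.
apply: le_trans (ler_norm_sum _ _ _) _.
apply: (@le_trans _ _ (\sum_s `|A r s| * B)).
  by apply: ler_sum => s _; rewrite normrM; apply: ler_wpM2l => //; exact: normr_ge0.
rewrite -mulr_suml; apply: ler_wpM2r => //.
rewrite (bigD1 r) //= lerDl; apply: sumr_ge0 => i _; apply: sumr_ge0 => s _; exact: normr_ge0.
Qed.

Lemma cvg_exp (V : normedModType R) (f : R -> V) (l : V) (M lam : R) :
  0 < lam -> (forall t : R, 0 < t -> `|f t - l| <= M * expR (- lam * t)) ->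
  f t @[t --> +oo] --> l.
Proof.
move=> l0 H; apply/cvgrPdist_le => e e0.
near=> t.
have tT : `|M| / (e * lam) < t by near: t; apply: nbhs_pinfty_gt; rewrite num_real.
have t0 : 0 < t by apply: le_lt_trans tT; rewrite divr_ge0 // ?mulr_ge0 // ltW.
rewrite distrC; apply: le_trans (H t t0) _.
have X0 := expR_gt0 (- lam * t).
have XY : expR (- lam * t) * (1 + lam * t) <= 1.
  have := expR_ge1Dx (lam * t); have := expRN (lam * t).
  rewrite mulNr => ->; move=> h.
  apply: (@le_trans _ _ ((expR (lam * t))^-1 * expR (lam * t))).
    by apply: ler_wpM2l => //; rewrite invr_ge0 ltW // expR_gt0.
  by rewrite mulVf // gt_eqF // expR_gt0.
have hM : `|M| < e * (1 + lam * t).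
  move: tT; rewrite ltr_pdivrMr ?mulr_gt0 // => h.
  have : e * lam * t <= e * (lam * t) + e by rewrite mulrA lerDl ltW.
  lra.
have : M <= `|M| := ler_norm M.
have := normr_ge0 M.
nra.
Unshelve. all: by end_near.
Qed.

End P15.

Section P16.
Variable R : realType.

Lemma stack_lin d m (a b : R) (u w : 'I_m -> 'rV[R]_d) :
  stack (fun i => a *: u i - b *: w i) = a *: stack u - b *: stack w.
Proof.
apply/matrixP => r c; case/mxvec_indexP: r => i k; rewrite ord1.
by rewrite !mxE !mxvecE !mxE.
Qed.

Lemma is_derive_subf N (f g : R -> 'cV[R]_N) df dg t v :
  is_derive t v f df -> is_derive t v g dg ->
  is_derive t v (fun s => f s - g s) (df - dg).
Proof.
move=> Hf Hg; have := is_deriveB Hf Hg; move=> [d1 d2]; apply: DeriveDef; first exact: d1.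
by rewrite d2.
Qed.

Lemma is_derive_negf N (f : R -> 'cV[R]_N) df t v :
  is_derive t v f df -> is_derive t v (fun s => - f s) (- df).
Proof.
move=> Hf; have := is_deriveN Hf; move=> [d1 d2]; apply: DeriveDef; first exact: d1.
by rewrite d2.
Qed.

End P16.

Unset Implicit Arguments.
Set Strict Implicit.

Theorem theorem2 (R : realType) (d nl nf : nat)
  (E : rel 'I_(nl + nf)) (g : 'I_(nl + nf) -> 'I_(nl + nf) -> 'rV[R]_d)
  (kP kI : R) (v : 'I_nl -> 'rV[R]_d)
  (p : 'I_(nl + nf) -> R -> 'rV[R]_d) (xi : 'I_nf -> R -> 'rV[R]_d) :
  (2 <= d)%N -> (2 <= nl)%N ->
  (forall i j, E i j = E j i) -> (forall i, ~~ E i i) ->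
  0 < kP -> 0 < kI ->
  (* leaders: constant velocity *)
  (forall (i : 'I_nl) (t : R), 0 < t -> is_derive t 1 (p (lshift nf i)) (v i)) ->
  (* followers: PI bearing control law *)
  (forall (i : 'I_nf) (t : R), 0 < t ->
     is_derive t 1 (p (rshift nl i))
       (- kP *: (\sum_(j | E (rshift nl i) j)
                   ((p (rshift nl i) t - p j t) *m Pproj (g (rshift nl i) j)))
        - kI *: xi i t)) ->
  (forall (i : 'I_nf) (t : R), 0 < t ->
     is_derive t 1 (xi i)
       (\sum_(j | E (rshift nl i) j)
          ((p (rshift nl i) t - p j t) *m Pproj (g (rshift nl i) j)))) ->
  (* standing assumption: target formation exists and is inf. bearing rigid *)
  (forall t : R, 0 <= t -> exists q : 'M[R]_(nl + nf, d),
     target_formation E g (fun i => p (lshift nf i) t) q /\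
     inf_bearing_rigid E q) ->
  let pl := fun t : R => stack (fun i : 'I_nl => p (lshift nf i) t) in
  let pf := fun t : R => stack (fun i : 'I_nf => p (rshift nl i) t) in
  let xf := fun t : R => stack (fun i : 'I_nf => xi i t) in
  let pfstar := fun t : R => - (invmx (Lff E g) *m Lfl E g *m pl t) in
  let delta := fun t : R => (pf t - pfstar t : 'cV[R]_(nf * d)) in
  let xinf := kI^-1 *: (invmx (Lff E g) *m Lfl E g *m stack v) in
  (exists M lam : R, 0 < lam /\
     forall t : R, 0 <= t -> `|delta t| <= M * expR (- lam * t)) /\
  (exists M lam : R, 0 < lam /\
     forall t : R, 0 <= t -> `|xf t - xinf| <= M * expR (- lam * t)) /\
  (delta t @[t --> +oo] --> (0 : 'cV[R]_(nf * d))) /\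
  (xf t @[t --> +oo] --> xinf) /\
  (stack (fun i : 'I_nf => 'D_1 (p (rshift nl i)) t) @[t --> +oo]
     --> - (invmx (Lff E g) *m Lfl E g *m stack v)).
Proof.
move=> d2 nl2 Esym Eirr kP0 kI0 Hlead Hfoll Hxi Hst pl pf xf pfstar delta xinf.
have [q [[_ Hg] Hrig]] := Hst 0 (lexx 0).
have [Hsym Hid psd inj] := @Lff_props R d nl nf E g q nl2 Esym Eirr Hg Hrig.
have Ltr : (Lff E g)^T = Lff E g := Lff_tr Esym Hsym.
have [Lu [m [m0 coer]]] := coercive Ltr psd inj.
pose F := fun t => stack (fun i : 'I_nf => frow E g (fun J => p J t) (rshift nl i)).
have HF : forall t, F t = Lff E g *m pf t + Lfl E g *m pl t.
  by move=> t; exact: (@follower_stack R d nl nf E g (fun J => p J t) Eirr).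
have Hpl : forall t : R, 0 < t -> is_derive t 1 pl (stack v).
  by move=> t t0; exact: (@is_derive_stack R d nl (fun i => p (lshift nf i)) v t 1 (fun i => Hlead i t t0)).
have Hpf : forall t : R, 0 < t -> is_derive t 1 pf (- kP *: F t - kI *: xf t).
  move=> t t0.
  have := @is_derive_stack R d nf (fun i => p (rshift nl i)) _ t 1 (fun i => Hfoll i t t0).
  by rewrite stack_lin.
have Hxf : forall t : R, 0 < t -> is_derive t 1 xf (F t).
  by move=> t t0; exact: (@is_derive_stack R d nf xi _ t 1 (fun i => Hxi i t t0)).
pose th := fun t => invmx (Lff E g) *m (xf t - xinf).
have LA : Lff E g *m (invmx (Lff E g) *m Lfl E g) = Lfl E g.
  by rewrite mulmxA mulmxV // mul1mx.
have Ldelta : forall t, Lff E g *m delta t = F t.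
  by move=> t; rewrite /delta /pfstar mulmxBr mulmxN opprK mulmxA LA HF.
have Lth : forall t, Lff E g *m th t = xf t - xinf.
  by move=> t; rewrite /th mulmxA mulmxV // mul1mx.
have kIx : kI *: xinf = invmx (Lff E g) *m Lfl E g *m stack v.
  by rewrite /xinf scalerA mulfV ?gt_eqF // scale1r.
have Hth : forall t : R, 0 < t -> is_derive t 1 th (delta t).
  move=> t t0.
  have := is_derive_mulmx (invmx (Lff E g)) (is_derive_subf (Hxf t t0) (is_derive_cst xinf t 1)).
  case=> dd1 dd2; apply: DeriveDef; first exact: dd1.
  by rewrite dd2 subr0 -Ldelta mulmxA mulVmx // mul1mx.
have Hde : forall t : R, 0 < t ->
    is_derive t 1 delta (- kP *: (Lff E g *m delta t) - kI *: (Lff E g *m th t)).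
  move=> t t0.
  have := is_derive_subf (Hpf t t0) (is_derive_negf (is_derive_mulmx (invmx (Lff E g) *m Lfl E g) (Hpl t t0))).
  case=> dd1 dd2; apply: DeriveDef; first exact: dd1.
  rewrite dd2 Ldelta Lth scalerBr kIx.
  by apply/matrixP => i j; rewrite !mxE; ring.
have [K [lam [lam0 Hb]]] := ode_decay Ltr m0 coer kP0 kI0 Hth Hde.
have K0 : 0 <= K.
  have := Hb 1 ltr01; case=> h _; have := dotv_ge0 (delta 1).
  have := expR_gt0 (- lam * 1); nra.
pose B := fun t : R => Num.sqrt K * expR (- (lam / 2) * t).
have B0 : forall t, 0 <= B t.
  by move=> t; rewrite /B mulr_ge0 ?sqrtr_ge0 ?expR_ge0.
have BK : forall t, B t ^+ 2 = K * expR (- lam * t).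
  move=> t; rewrite /B exprMn sqr_sqrtr // expr2 -expRD.
  by have -> : - (lam / 2) * t + - (lam / 2) * t = - lam * t by field.
have hd : forall t : R, 0 < t -> `|delta t| <= B t.
  by move=> t t0; apply: norm_of_dotv => //; rewrite BK; case: (Hb t t0).
have hth : forall t : R, 0 < t -> dotv (th t) (th t) <= B t ^+ 2.
  by move=> t t0; rewrite BK; case: (Hb t t0).
have hdd : forall t : R, 0 < t -> dotv (delta t) (delta t) <= B t ^+ 2.
  by move=> t t0; rewrite BK; case: (Hb t t0).
pose Mu := \sum_r \sum_s `|Lff E g r s|.
have Mu0 : 0 <= Mu by apply: sumr_ge0 => r _; apply: sumr_ge0 => s _; exact: normr_ge0.
have hLth : forall t : R, 0 < t -> `|xf t - xinf| <= Mu * B t.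
  by move=> t t0; rewrite -Lth; exact: norm_mul_dotv (B0 t) (hth t t0).
have hLd : forall t : R, 0 < t -> `|Lff E g *m delta t| <= Mu * B t.
  by move=> t t0; exact: norm_mul_dotv (B0 t) (hdd t t0).
have lam2 : 0 < lam / 2 by rewrite divr_gt0.
split; [|split; [|split; [|split]]].
- exists (Num.max (Num.sqrt K) `|delta 0|), (lam / 2); split => // t.
  rewrite le_eqVlt => /orP[/eqP <-|t0].
    by rewrite mulr0 expR0 mulr1 le_max lexx orbT.
  apply: le_trans (hd t t0) _; rewrite /B; apply: ler_wpM2r; first exact: expR_ge0.
  by rewrite le_max lexx.
- exists (Num.max (Mu * Num.sqrt K) `|xf 0 - xinf|), (lam / 2); split => // t.
  rewrite le_eqVlt => /orP[/eqP <-|t0].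
    by rewrite mulr0 expR0 mulr1 le_max lexx orbT.
  apply: le_trans (hLth t t0) _; rewrite /B mulrA; apply: ler_wpM2r; first exact: expR_ge0.
  by rewrite le_max lexx.
- apply: (@cvg_exp _ _ delta 0 (Num.sqrt K) (lam / 2) lam2) => t t0.
  by rewrite subr0; exact: hd.
- apply: (@cvg_exp _ _ xf xinf (Mu * Num.sqrt K) (lam / 2) lam2) => t t0.
  by rewrite -mulrA; exact: hLth.
apply: (@cvg_exp _ _ _ _ ((kP + kI) * Mu * Num.sqrt K) (lam / 2) lam2) => t t0.
have -> : stack (fun i : 'I_nf => 'D_1 (p (rshift nl i)) t) = - kP *: F t - kI *: xf t.
  rewrite -stack_lin; congr stack; apply/funext => i.
  by case: (Hfoll i t t0).
have -> : - kP *: F t - kI *: xf t - - (invmx (Lff E g) *m Lfl E g *m stack v) =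
    - (kP *: (Lff E g *m delta t) + kI *: (xf t - xinf)).
  rewrite -Ldelta -kIx; apply/matrixP => i j; rewrite !mxE; ring.
rewrite normrN; apply: le_trans (ler_normD _ _) _; rewrite !normrZ.
rewrite !gtr0_norm //.
have := hLd t t0; have := hLth t t0; rewrite /B => h1 h2.
have -> : (kP + kI) * Mu * Num.sqrt K * expR (- (lam / 2) * t) =
   kP * (Mu * (Num.sqrt K * expR (- (lam / 2) * t))) + kI * (Mu * (Num.sqrt K * expR (- (lam / 2) * t))) by ring.
by apply: lerD; apply: ler_wpM2l => //; exact: ltW.
Qed.
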